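(* Let $n\geq 2$. If $\prec_1,\ldots,\prec_n$ are linear orders on $D_n$ which realize the product order $<$ on $D_n$, then there are linear orders $\prec_1^*,\ldots,\prec_n^*$ on $\mathbb{Q}^n$ extending $\prec_1,\ldots,\prec_n$ respectively which realize the product order on $\mathbb{Q}^n$.
   Context: Fix $n\geq 2$ and a set $D_n\subseteq\mathbb{Q}^n$ which is dense in $\mathbb{Q}^n$ (product topology) and such that no two distinct points of $D_n$ share a common coordinate. The product order: $\mathbf{a}<\mathbf{b}$ iff $a_i\leq b_i$ for all $i$ and $\mathbf{a}\neq\mathbf{b}$. Linear orders $\prec_1,\ldots,\prec_n$ on a set realize a partial order $<$ on it if $<\;=\;\prec_1\cap\cdots\cap\prec_n$. *)

(* Defs.v *)
From mathcomp Require Import all_boot all_order all_algebra.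
Set Implicit Arguments. Unset Strict Implicit. Unset Printing Implicit Defensive.
Import Order.TTheory GRing.Theory Num.Theory.
Local Open Scope ring_scope.

Definition Qpt (n : nat) := {ffun 'I_n -> rat}.

Definition prod_lt (n : nat) (a b : Qpt n) : Prop :=
  (forall i, a i <= b i) /\ a <> b.

(* D is dense in Q^n (product topology): every nonempty basic open box
   prod_i (l_i, u_i) meets D. *)
Definition dense_Qn (n : nat) (D : Qpt n -> Prop) : Prop :=
  forall (l u x : Qpt n), (forall i, l i < x i < u i) ->
    exists d, D d /\ forall i, l i < d i < u i.

Definition no_common_coord (n : nat) (D : Qpt n -> Prop) : Prop :=
  forall d e, D d -> D e -> d <> e -> forall i, d i <> e i.

Definition linear_order_on (T : Type) (S : T -> Prop) (R : T -> T -> Prop) : Prop :=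
  (forall x, S x -> ~ R x x) /\
  (forall x y z, S x -> S y -> S z -> R x y -> R y z -> R x z) /\
  (forall x y, S x -> S y -> x <> y -> R x y \/ R y x).

Definition realizes_on (n : nat) (S : Qpt n -> Prop)
    (prec : 'I_n -> Qpt n -> Qpt n -> Prop) : Prop :=
  forall a b, S a -> S b -> (prod_lt a b <-> forall i, prec i a b).

(* Main.v *)
Require Import Defs.
From mathcomp Require Import all_boot all_order all_algebra.
From mathcomp Require Import lra.
From Stdlib Require Import Classical IndefiniteDescription.
Set Implicit Arguments. Unset Strict Implicit. Unset Printing Implicit Defensive.
Import Order.TTheory GRing.Theory Num.Theory.
Local Open Scope ring_scope.

Lemma choiceT (A B : Type) (P : A -> B -> Prop) :
  (forall x, exists y, P x y) -> exists f : A -> B, forall x, P x (f x).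
Proof.
move=> h; exists (fun x => proj1_sig (constructive_indefinite_description _ (h x))).
by move=> x; exact: proj2_sig.
Qed.

Lemma lower_seq (s : seq rat) : exists c, forall x, x \in s -> c < x.
Proof.
elim: s => [|y s [c hc]]; first by exists 0.
exists (Num.min c (y - 1)) => x; rewrite in_cons => /orP [/eqP ->|xs].
  rewrite gt_min; apply/orP; right; lra.
rewrite gt_min; apply/orP; left; exact: hc.
Qed.

Lemma lower_bound (n : nat) (f : 'I_n -> rat) : exists c, forall i, c < f i.
Proof.
have [c hc] := lower_seq [seq f i | i <- enum 'I_n].
exists c => i; apply: hc; apply/mapP; exists i => //; by rewrite mem_enum.
Qed.

Lemma upper_bound (n : nat) (f : 'I_n -> rat) : exists c, forall i, f i < c.
Proof.
have [c hc] := lower_bound (fun i => - f i).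
exists (- c) => i; have := hc i; lra.
Qed.

Lemma nnorm (x : rat) : - `|x| <= x.
Proof. have := ler_norm (- x); rewrite normrN; lra. Qed.

Section Main.
Variable n : nat.
Variable D : Qpt n -> Prop.
Hypothesis hdense : dense_Qn D.
Hypothesis hcoord : no_common_coord D.
Variable prec : 'I_n -> Qpt n -> Qpt n -> Prop.
Hypothesis hlin : forall i, linear_order_on D (prec i).
Hypothesis hreal : realizes_on D prec.

Lemma p_irr i x : D x -> ~ prec i x x.
Proof. by case: (hlin i) => h _; apply: h. Qed.
Lemma p_trans i x y z : D x -> D y -> D z -> prec i x y -> prec i y z -> prec i x z.
Proof. by case: (hlin i) => _ [h _]; apply: h. Qed.
Lemma p_tot i x y : D x -> D y -> x <> y -> prec i x y \/ prec i y x.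
Proof. by case: (hlin i) => _ [_ h]; apply: h. Qed.

Lemma plt_prec i a b : D a -> D b -> prod_lt a b -> prec i a b.
Proof. by move=> Da Db h; apply: (proj1 (hreal Da Db)). Qed.

Lemma R_ne a b : D a -> D b -> a <> b -> ~ prod_lt a b -> exists i, prec i b a.
Proof.
move=> Da Db ne np.
have : ~ (forall i, prec i a b) by move=> h; apply: np; apply/(hreal Da Db).
move/not_all_ex_not => [i hi]; exists i.
by case: (p_tot i Da Db ne).
Qed.

Lemma disj i b a b' a' : D b -> D a -> D b' -> D a' ->
  prec i b a -> prec i b' a' -> prod_lt a b' -> prod_lt a' b -> False.
Proof.
move=> Db Da Db' Da' h1 h2 l1 l2.
have h3 := plt_prec i Da Db' l1. have h4 := plt_prec i Da' Db l2.
apply: (p_irr (i:=i) Db).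
apply: (p_trans Db Da Db h1); apply: (p_trans Da Db' Db h3).
exact: (p_trans Db' Da' Db h2 h4).
Qed.

Lemma box (l u : 'I_n -> rat) : (forall k, l k < u k) ->
  exists x, D x /\ forall k, l k < x k < u k.
Proof.
move=> h.
have h0 : forall k, [ffun k => l k] k < [ffun k => (l k + u k) / 2] k < [ffun k => u k] k.
  move=> k; rewrite !ffunE; have := h k; move=> hk; apply/andP; split; lra.
have [x [Dx hx]] := hdense h0.
by exists x; split => // k; have := hx k; rewrite !ffunE.
Qed.


Lemma ML j : exists i, forall d e, D d -> D e -> d j < e j -> prec i d e.
Proof.
apply NNPP; intro H.
have H1 : forall i, exists de : Qpt n * Qpt n,
  [/\ D de.1, D de.2, de.1 j < de.2 j & prec i de.2 de.1].
  move=> i; apply: NNPP => Hn; apply: H; exists i => d e Dd De lt.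
  have ne : d <> e by move=> E; move: lt; rewrite E ltxx.
  case: (p_tot i Dd De ne) => // h; exfalso; apply: Hn; exists (d, e); by split.
have [de Hde] := choiceT H1.
pose d i := (de i).1. pose e i := (de i).2.
have Dd i : D (d i) by case: (Hde i).
have De i : D (e i) by case: (Hde i).
have lde i : d i j < e i j by case: (Hde i).
have ped i : prec i (e i) (d i) by case: (Hde i).
have hb i : exists x : Qpt n, D x /\ forall k,
   (if k == j then d i j else `|d i k| + 20) < x k < (if k == j then (d i j + e i j)/2 else `|d i k| + 21).
  apply: (box) => k; case: eqP => _; have := lde i; lra.
have [b Hb] := choiceT hb.
have ha i : exists x : Qpt n, D x /\ forall k,
   (if k == j then (d i j + e i j)/2 else - `|e i k| - 2) < x k < (if k == j then e i j else - `|e i k| - 1).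
  apply: (box) => k; case: eqP => _; have := lde i; lra.
have [a Ha] := choiceT ha.
have [clo hclo] := lower_bound (fun i => b i j).
have [chi hchi] := upper_bound (fun i => a i j).
have hbb m : exists x : Qpt n, D x /\ forall k,
  (if k == j then chi else if k == m then 7 else 13) < x k < (if k == j then chi + 1 else if k == m then 9 else 15).
  apply: (box) => k; case: eqP => _; last case: eqP => _; lra.
have [bb Hbb] := choiceT hbb.
have haa m : exists x : Qpt n, D x /\ forall k,
  (if k == j then clo - 1 else if k == m then 9 else 3) < x k < (if k == j then clo else if k == m then 11 else 5).
  apply: (box) => k; case: eqP => _; last case: eqP => _; lra.
have [aa Haa] := choiceT haa.
have Db i := (Hb i).1. have Da i := (Ha i).1. have Dbb m := (Hbb m).1. have Daa m := (Haa m).1.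
have hcc : clo < chi.
  have := hclo j; have := hchi j; have /andP[_ h1] := (Hb j).2 j; have /andP[h2 _] := (Ha j).2 j.
  move: h1 h2; rewrite eqxx; lra.
have F1 i : prod_lt (d i) (b i).
  split.
    move=> k; have /andP[h1 h2] := (Hb i).2 k; move: h1 h2; case: eqP => [->|_] h1 h2; first lra.
    have := ler_norm (d i k); lra.
  move=> E; have /andP[h1 _] := (Hb i).2 j; move: h1; rewrite eqxx -E; lra.
have F2 i : prod_lt (a i) (e i).
  split.
    move=> k; have /andP[h1 h2] := (Ha i).2 k; move: h1 h2; case: eqP => [->|_] h1 h2; first lra.
    have := nnorm (e i k); lra.
  move=> E; have /andP[_ h1] := (Ha i).2 j; move: h1; rewrite eqxx E; lra.
have F3 i : exists i', prec i' (b i) (a i).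
  have hab : b i j < a i j.
    have /andP[_ h1] := (Hb i).2 j; have /andP[h2 _] := (Ha i).2 j; move: h1 h2; rewrite eqxx; lra.
  apply: (R_ne (Da i) (Db i)).
    by move=> E; move: hab; rewrite E ltxx.
  by case=> /(_ j) h _; move: h hab; lra.
have F4 m : exists i', m != j -> prec i' (bb m) (aa m).
  case: (eqVneq m j) => [->|hm]; first by exists j; move/eqP.
  have hab : bb m m < aa m m.
    have /andP[_ h1] := (Hbb m).2 m; have /andP[h2 _] := (Haa m).2 m.
    move: h1 h2; rewrite eqxx (negbTE hm); lra.
  have [i' hi'] : exists i', prec i' (bb m) (aa m).
    apply: (R_ne (Daa m) (Dbb m)).
      by move=> E; move: hab; rewrite E ltxx.
    by case=> /(_ m) h _; move: h hab; lra.
  by exists i'.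
have F5 i m : m != j -> prod_lt (a i) (bb m) /\ prod_lt (aa m) (b i).
  move=> hm; split; split.
  - move=> k; have /andP[_ h1] := (Ha i).2 k; have /andP[h2 _] := (Hbb m).2 k.
    move: h1 h2; case: eqP => [->|_] h1 h2; first by have := hchi i; lra.
    have := normr_ge0 (e i k); case: eqP => _ in h2 *; lra.
  - move=> E; have /andP[_ h1] := (Ha i).2 j; have /andP[h2 _] := (Hbb m).2 j.
    move: h1 h2; have := hchi i; rewrite eqxx E; lra.
  - move=> k; have /andP[_ h1] := (Haa m).2 k; have /andP[h2 _] := (Hb i).2 k.
    move: h1 h2; case: eqP => [->|_] h1 h2; first by have := hclo i; lra.
    have := normr_ge0 (d i k); case: eqP => _ in h1 *; lra.
  - move=> E; have /andP[_ h1] := (Haa m).2 j; have /andP[h2 _] := (Hb i).2 j.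
    move: h1 h2; have := hclo i; rewrite eqxx E; lra.
have F6 m m' : m != m' -> prod_lt (aa m) (bb m').
  move=> hmm; split.
    move=> k; have /andP[_ h1] := (Haa m).2 k; have /andP[h2 _] := (Hbb m').2 k.
    move: h1 h2; case: eqP => _; first lra.
    case: (eqVneq k m) => [->|_]; last by case: eqP => _; lra.
    by rewrite (negbTE hmm); lra.
  move=> E; have /andP[_ h1] := (Haa m).2 j; have /andP[h2 _] := (Hbb m').2 j.
  move: h1 h2; rewrite eqxx E; lra.
have [g Hg] := choiceT F3.
have [f Hf] := choiceT F4.
have not_img i m : m != j -> g i <> f m.
  move=> hm E; have [l1 l2] := F5 i m hm.
  apply: (disj (Db i) (Da i) (Dbb m) (Daa m) (Hg i) _ l1 l2).
  by rewrite E; apply: Hf.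
have finj m m' : m != j -> m' != j -> m != m' -> f m <> f m'.
  move=> hm hm' hmm E.
  apply: (disj (Dbb m) (Daa m) (Dbb m') (Daa m') (Hf m hm) _ (F6 _ _ hmm) (F6 _ _ _)).
    by rewrite E; apply: Hf.
  by rewrite eq_sym.
pose i0 := g j.
have claim : g i0 = i0.
  apply: NNPP => hne.
  pose F := fun m => if m == j then g i0 else f m.
  have Finj : injective F.
    move=> m1 m2; rewrite /F.
    case: (eqVneq m1 j) => [->|h1]; case: (eqVneq m2 j) => [->|h2] //.
    - by move=> E; exfalso; apply: (not_img i0 m2 h2).
    - by move=> E; exfalso; apply: (not_img i0 m1 h1).
    - case: (eqVneq m1 m2) => // h12 E; exfalso; exact: (finj _ _ h1 h2 h12 E).
  have [G FG GF] := injF_bij Finj.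
  have := GF i0; rewrite /F; case: eqP => [_|/eqP hG] E.
    by apply: hne.
  by apply: (not_img j (G i0) hG); rewrite E.
have hp := Hg i0; rewrite claim in hp.
have p1 := plt_prec i0 (Dd i0) (Db i0) (F1 i0).
have p2 := plt_prec i0 (Da i0) (De i0) (F2 i0).
apply: (p_irr (Dd i0)).
apply: (p_trans (Dd i0) (De i0) (Dd i0) _ (ped i0)).
apply: (p_trans (Dd i0) (Db i0) (De i0) p1).
exact: (p_trans (Db i0) (Da i0) (De i0) hp p2).
Qed.

End Main.

Definition lexlt (n : nat) (a b : Qpt n) : Prop :=
  exists k : 'I_n, (forall m : 'I_n, (m < k)%N -> a m = b m) /\ a k < b k.

Lemma lex_irr n (a : Qpt n) : ~ lexlt a a.
Proof. by case=> k [_]; rewrite ltxx. Qed.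

Lemma lex_trans n (a b c : Qpt n) : lexlt a b -> lexlt b c -> lexlt a c.
Proof.
move=> [k1 [e1 l1]] [k2 [e2 l2]].
case: (ltngtP k1 k2) => h.
- exists k1; split; last by rewrite -(e2 k1 h).
  by move=> m hm; rewrite e1 // e2 //; apply: ltn_trans h.
- exists k2; split; last by rewrite (e1 k2 h).
  by move=> m hm; rewrite e1 ?e2 //; apply: ltn_trans h.
- have E : k1 = k2 by apply: val_inj.
  subst; exists k2; split; last exact: lt_trans l2.
  by move=> m hm; rewrite e1 // e2.
Qed.

Lemma least_diff n (a b : Qpt n) : a <> b ->
  exists k : 'I_n, (forall m : 'I_n, (m < k)%N -> a m = b m) /\ a k <> b k.
Proof.
move=> ne.
have [k0 hk0] : exists k0, a k0 != b k0.
  apply: NNPP => H; apply: ne; apply/ffunP => k.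
  by apply/eqP; apply: NNPP => h; apply: H; exists k; apply/negP.
case: (@arg_minnP _ k0 (fun k => a k != b k) (fun k : 'I_n => val k) hk0) => k hk hmin.
exists k; split; last by apply/eqP.
move=> m hm; apply/eqP; apply: NNPP => /negP h.
by have := hmin m h; rewrite leqNgt hm.
Qed.

Lemma lex_tot n (a b : Qpt n) : a <> b -> lexlt a b \/ lexlt b a.
Proof.
move=> /least_diff [k [e h]].
case: (ltgtP (a k) (b k)) => hk.
- by left; exists k.
- by right; exists k; split => // m hm; rewrite e.
- by [].
Qed.

Lemma lex_ext n (a b : Qpt n) : (forall i, a i <= b i) -> a <> b -> lexlt a b.
Proof.
move=> hle /least_diff [k [e h]]; exists k; split => //.
by rewrite lt_neqAle hle andbT; apply/eqP.
Qed.

Unset Implicit Arguments.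

Theorem lemma6p4 (n : nat) (D : Qpt n -> Prop)
  (hn : (2 <= n)%N) (hdense : dense_Qn D) (hcoord : no_common_coord D)
  (prec : 'I_n -> Qpt n -> Qpt n -> Prop)
  (hlin : forall i, linear_order_on D (prec i))
  (hreal : realizes_on D prec) :
  exists precstar : 'I_n -> Qpt n -> Qpt n -> Prop,
    (forall i, linear_order_on (fun _ => True) (precstar i)) /\
    (forall i a b, D a -> D b -> (prec i a b <-> precstar i a b)) /\
    realizes_on (fun _ => True) precstar.
Proof.
have [s Hs] := choiceT (ML hdense hlin hreal).
have sinj : injective s.
  move=> j1 j2 E; case: (eqVneq j1 j2) => // hne; exfalso.
  pose l1 := fun k : 'I_n => if k == j1 then 0 else if k == j2 then 2 else 0 : rat.
  pose u1 := fun k : 'I_n => if k == j1 then 1 else if k == j2 then 3 else 1 : rat.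
  pose l2 := fun k : 'I_n => if k == j1 then 2 else 0 : rat.
  pose u2 := fun k : 'I_n => if k == j1 then 3 else 1 : rat.
  have hl1 : forall k, l1 k < u1 k.
    by move=> k; rewrite /l1 /u1; case: eqP => _; last case: eqP => _.
  have hl2 : forall k, l2 k < u2 k.
    by move=> k; rewrite /l2 /u2; case: eqP => _.
  have [d [Dd hd]] := box hdense hl1.
  have [e [De he]] := box hdense hl2.
  have h1 : d j1 < e j1.
    have /andP[_ x1] := hd j1; have /andP[x2 _] := he j1; move: x1 x2; rewrite /l2 /u1 eqxx; lra.
  have h2 : e j2 < d j2.
    have /andP[x2 _] := hd j2; have /andP[_ x1] := he j2.
    move: x1 x2; rewrite /l1 /u2 eq_sym (negbTE hne) eqxx; lra.
  have p1 := Hs j1 d e Dd De h1. have p2 := Hs j2 e d De Dd h2.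
  rewrite -E in p2.
  exact: (p_irr hlin Dd (p_trans hlin Dd De Dd p1 p2)).
pose t := invF sinj.
have st i : s (t i) = i by rewrite /t f_invF.
have ts k : t (s k) = k by rewrite /t invF_f.
have i0 : 'I_n := @Ordinal n 0 (leq_trans (isT : (1 <= 2)%N) hn).
have coordeq : forall a b k, D a -> D b -> a k = b k -> a = b.
  move=> a b k Da Db h; apply: NNPP => ne; exact: (hcoord a b Da Db ne k h).
exists (fun i (a b : Qpt n) => a (t i) < b (t i) \/ (a (t i) = b (t i) /\ lexlt a b)).
split; last split.
- move=> i; split; last split.
  + by move=> x _ [|[_ /lex_irr]] //; rewrite ltxx.
  + move=> x y z _ _ _ [h1|[h1 l1]] [h2|[h2 l2]].
    * by left; apply: lt_trans h2.
    * by left; rewrite -h2.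
    * by left; rewrite h1.
    * by right; split; [rewrite h1|apply: lex_trans l2].
  + move=> x y _ _ ne; case: (ltgtP (x (t i)) (y (t i))) => h.
    * by left; left.
    * by right; left.
    * by case: (lex_tot ne) => l; [left|right]; right.
- move=> i a b Da Db; split.
  + move=> p; case: (ltgtP (a (t i)) (b (t i))) => h.
    * by left.
    * have := Hs (t i) b a Db Da h; rewrite st => q.
      by exfalso; apply: (p_irr hlin Da (p_trans hlin Da Db Da p q)).
    * have E := coordeq _ _ _ Da Db h; subst; exfalso; exact: (p_irr hlin Da p).
  + move=> [h|[h l]].
    * by have := Hs (t i) a b Da Db h; rewrite st.
    * by have E := coordeq _ _ _ Da Db h; subst; exfalso; apply: (lex_irr l).
- move=> a b _ _; split.
  + move=> [hle hne] i; case: (ltgtP (a (t i)) (b (t i))) => h.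
    * by left.
    * by have := hle (t i); rewrite leNgt h.
    * by right; split => //; apply: lex_ext.
  + move=> h; split.
    * move=> k; have := h (s k); rewrite ts; case=> [/ltW //|[-> _]] //.
    * move=> E; subst; have := h i0; case=> [|[_ /lex_irr]] //; by rewrite ltxx.
Qed.
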